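(* Let $n,m\in\mathbb{N}$ and $f,g:\mathbb{F}_2^n\to\mathbb{F}_2$. Run algorithm $\mathbb{A}^{(m)}(\mathrm{H}^{\otimes n})$ and measure all $2n$ qubits. Then for every $\mathbf{y}\in\mathbb{F}_2^n$ the probability of observing $\ket{\mathbf{y}}\ket{0^n}$ is $2^{-3n}|C^{(m)}_{f,g}(\mathbf{y})|^2$.
   Context: $\zeta_m=e^{2\pi i/m}$, $\overline{\zeta_m}$ its conjugate; $wt$ is Hamming weight; $\mathbf{x}\cdot\mathbf{y}=\bigoplus_i x_iy_i$; $\mathbf{x}\odot\mathbf{y}=\sum_ix_iy_i$ in the integers. $m$-crosscorrelation: $C^{(m)}_{f,g}(\mathbf{y})=\sum_{\mathbf{x}}(-1)^{f(\mathbf{x})\oplus g(\mathbf{x}\oplus\mathbf{y})}(\zeta_m^2)^{\mathbf{x}\odot\mathbf{y}}$. Gates: $\mathrm{H}$ Hadamard; $\Omega_m=\frac{1}{\sqrt2}\begin{pmatrix}1&\zeta_m\\1&-\zeta_m\end{pmatrix}$; $\overline{\Omega}_m=\frac{1}{\sqrt2}\begin{pmatrix}1&\overline{\zeta_m}\\1&-\overline{\zeta_m}\end{pmatrix}$; $U_f$ is the phase oracle $\ket{\mathbf{x}}\mapsto(-1)^{f(\mathbf{x})}\ket{\mathbf{x}}$. Algorithm $\mathbb{A}^{(m)}(\mathrm{C}_n)$, for an $n$-qubit unitary $\mathrm{C}_n$: two $n$-qubit registers start in $\ket{0^n}\ket{0^n}$; apply $\mathrm{C}_n$ to the first register; then on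 the second register run the three-query $m$-Forrelation circuit with the middle oracle replaced by the inner-product phase oracle controlled by the first register, i.e. apply to the second register in order $\mathrm{H}^{\otimes n}$, $U_f$, $\Omega_m^{\otimes n}$, then the two-register gate $\ket{\mathbf{y}}\ket{\mathbf{x}}\mapsto(-1)^{\mathbf{x}\cdot\mathbf{y}}\ket{\mathbf{y}}\ket{\mathbf{x}}$, then $\mathrm{H}^{\otimes n}$, $U_g$, $\overline{\Omega}_m^{\otimes n}$ on the second register; finally measure both registers. *)

(* Defs.v *)
From mathcomp Require Import all_boot all_algebra.
From mathcomp Require Import reals trigo.
From mathcomp Require Export complex.
Set Implicit Arguments. Unset Strict Implicit. Unset Printing Implicit Defensive.
Import GRing.Theory Num.Theory.
Local Open Scope ring_scope.
Local Open Scope complex_scope.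

(* Bit strings x in F_2^n, i.e. computational basis labels of n qubits. *)
Definition bits (n : nat) := {ffun 'I_n -> bool}.
Definition zero_bits (n : nat) : bits n := [ffun _ => false].
Definition xor_bits (n : nat) (x y : bits n) : bits n := [ffun i => x i (+) y i].

Definition dotF2 (n : nat) (x y : bits n) : bool := \big[addb/false]_(i < n) (x i && y i).
Definition dotZ (n : nat) (x y : bits n) : nat := \sum_(i < n) (x i && y i).

Section Quantum.
Variable R : realType.
Local Notation C := R[i].

Definition zeta (m : nat) : C := (cos (2 * pi / m%:R)) +i* (sin (2 * pi / m%:R)).

Definition sgn (b : bool) : C := (-1) ^+ b.

Definition crosscorr (m n : nat) (f g : bits n -> bool) (y : bits n) : C :=
  \sum_(x : bits n) sgn (f x (+) g (xor_bits x y)) * (zeta m ^+ 2) ^+ dotZ x y.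

(* A one-qubit gate given by its 2x2 matrix: G a b = <a| G |b> (row a, column b). *)
Definition gate1 := bool -> bool -> C.
Definition invsqrt2 : C := ((Num.sqrt (2 : R))^-1)%:C.
Definition hadamard : gate1 := fun a b => invsqrt2 * sgn (a && b).
(* Omega_m = 1/sqrt2 [[1, zeta],[1, -zeta]] *)
Definition omega (m : nat) : gate1 :=
  fun a b => invsqrt2 * (if b then zeta m else 1) * sgn (a && b).
(* conj(Omega)_m = 1/sqrt2 [[1, conj zeta],[1, - conj zeta]] *)
Definition omegabar (m : nat) : gate1 :=
  fun a b => invsqrt2 * (if b then (zeta m)^* else 1) * sgn (a && b).

(* An n-qubit operator, given by its matrix entries <z| U |x>. *)
Definition opn (n : nat) := bits n -> bits n -> C.
Definition tens (n : nat) (G : gate1) : opn n := fun z x => \prod_(i < n) G (z i) (x i).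
Definition phase_oracle (n : nat) (f : bits n -> bool) : opn n :=
  fun z x => if z == x then sgn (f x) else 0.

(* A state of two n-qubit registers: psi a b = amplitude of |a>|b>. *)
Definition state2 (n : nat) := bits n -> bits n -> C.
Definition init2 (n : nat) : state2 n :=
  fun a b => if (a == zero_bits n) && (b == zero_bits n) then 1 else 0.
Definition app1 (n : nat) (U : opn n) (psi : state2 n) : state2 n :=
  fun a b => \sum_(a' : bits n) U a a' * psi a' b.
Definition app2 (n : nat) (U : opn n) (psi : state2 n) : state2 n :=
  fun a b => \sum_(b' : bits n) U b b' * psi a b'.
(* two-register gate |y>|x> |-> (-1)^{x.y} |y>|x> (y = first register) *)
Definition ctrl_ip (n : nat) (psi : state2 n) : state2 n :=
  fun a b => sgn (dotF2 b a) * psi a b.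

Definition algA (m n : nat) (f g : bits n -> bool) (Cn : opn n) : state2 n :=
  let psi1 := app1 Cn (@init2 n) in
  let psi2 := app2 (@tens n hadamard) psi1 in
  let psi3 := app2 (phase_oracle f) psi2 in
  let psi4 := app2 (@tens n (omega m)) psi3 in
  let psi5 := ctrl_ip psi4 in
  let psi6 := app2 (@tens n hadamard) psi5 in
  let psi7 := app2 (phase_oracle g) psi6 in
  app2 (@tens n (omegabar m)) psi7.

Definition prob2 (n : nat) (psi : state2 n) (a b : bits n) : C := `|psi a b| ^+ 2.

End Quantum.
Arguments tens {R} n G _ _.
Arguments init2 {R} n _ _.
Arguments algA {R} m {n} f g Cn _ _.
Arguments crosscorr {R} m {n} f g y.
Arguments prob2 {R} {n} psi a b.
Arguments hadamard {R} _ _.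

(* Main.v *)
Require Import Defs.
From mathcomp Require Import all_boot all_algebra.
From mathcomp Require Import reals trigo complex ring.
Import GRing.Theory Num.Theory.
Local Open Scope ring_scope.
Set Implicit Arguments. Unset Strict Implicit.

Section S.
Variable R : realType.
Local Notation C := (R[i])%C.
Local Notation s := (invsqrt2 R).

Lemma zetaK m : zeta R m * (zeta R m)^* = 1.
Proof.
rewrite /zeta. apply/eqP; rewrite eq_complex /=.
set c := cos _; set si := sin _.
have h := cos2Dsin2 (2 * pi / m%:R : R).
rewrite -/c -/si in h.
apply/andP; split; apply/eqP; rewrite -?h; ring.
Qed.

Lemma norm_zeta m : `|zeta R m| = 1.
Proof.
have h : `|zeta R m| ^+ 2 = 1 by rewrite normCK zetaK.
have g : 0 <= `|zeta R m| by [].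
move/eqP: h; rewrite -[X in _ == X](expr1n _ 2) eqrXn2 //.
by move/eqP.
Qed.

Lemma s2 : s ^+ 2 = 2^-1.
Proof.
rewrite /invsqrt2 -rmorphXn /= exprVn sqr_sqrtr ?ler0n //.
by rewrite rmorphV ?unitfE ?pnatr_eq0 //= rmorph_nat.
Qed.

Lemma s_ge0 : 0 <= s.
Proof. by rewrite /invsqrt2 ler0c invr_ge0 sqrtr_ge0. Qed.

Lemma sgnD a b : sgn R (a (+) b) = sgn R a * sgn R b.
Proof. by case: a; case: b; rewrite /sgn /= ?expr0 ?expr1 ?mulr1 ?mul1r ?mulrNN ?mulr1. Qed.

Lemma sgn_dot n (a b : bits n) : sgn R (dotF2 a b) = \prod_i sgn R (a i && b i).
Proof.
rewrite /dotF2; apply: (big_morph (sgn R)) => //. exact: sgnD.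
Qed.

Lemma tensH n z x : tens n (@hadamard R) z x = s ^+ n * sgn R (dotF2 z x).
Proof.
by rewrite /tens /hadamard big_split /= prodr_const card_ord sgn_dot.
Qed.

Definition w m n (x : bits n) : C := \prod_i (if x i then zeta R m else 1).
Definition wb m n (x : bits n) : C := \prod_i (if x i then (zeta R m)^* else 1).

Lemma tensO m n z x : tens n (omega R m) z x = s ^+ n * w m x * sgn R (dotF2 z x).
Proof.
by rewrite /tens /omega /w !big_split /= prodr_const card_ord sgn_dot.
Qed.

Lemma tensOb m n z x : tens n (omegabar R m) z x = s ^+ n * wb m x * sgn R (dotF2 z x).
Proof.
by rewrite /tens /omegabar /wb !big_split /= prodr_const card_ord sgn_dot.
Qed.

Lemma oracle_sum n (f : bits n -> bool) i (h : bits n -> C) :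
  \sum_j phase_oracle R f i j * h j = sgn R (f i) * h i.
Proof.
rewrite (bigD1 i) //= big1 ?addr0 => [|j ne]; rewrite /phase_oracle.
  by rewrite eqxx.
by rewrite eq_sym (negbTE ne) mul0r.
Qed.

Lemma init_sum n (U : opn R n) a b :
  \sum_a' U a a' * init2 n a' b = if b == zero_bits n then U a (zero_bits n) else 0.
Proof.
rewrite (bigD1 (zero_bits n)) //= big1 ?addr0 => [|j ne]; rewrite /init2.
  by rewrite eqxx /=; case: (b == _); rewrite ?mulr1 ?mulr0.
by rewrite (negbTE ne) mulr0.
Qed.

Lemma dot0 n (z : bits n) : dotF2 z (zero_bits n) = false.
Proof. by rewrite /dotF2 big1 // => i _; rewrite ffunE andbF. Qed.

Lemma dotC n (a b : bits n) : dotF2 a b = dotF2 b a.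
Proof. by rewrite /dotF2; apply: eq_bigr => i _; rewrite andbC. Qed.

Lemma dot_xor n (b u v : bits n) :
  sgn R (dotF2 b (xor_bits u v)) = sgn R (dotF2 b u) * sgn R (dotF2 b v).
Proof.
rewrite !sgn_dot -big_split /=. apply: eq_bigr => i _.
rewrite ffunE; case: (b i) (u i) (v i) => [] [] []; rewrite /sgn /=; ring.
Qed.

Lemma charsum n (z : bits n) :
  \sum_b sgn R (dotF2 b z) = if z == zero_bits n then 2 ^+ n else 0.
Proof.
under eq_bigr do rewrite sgn_dot.
rewrite -(bigA_distr_bigA (fun i (c : bool) => sgn R (c && z i))) /=.
have E : forall i, \sum_(c : bool) sgn R (c && z i) = if z i then 0 else 2.
  move=> i; rewrite big_bool /=. case: (z i); rewrite /sgn /= ?expr1 ?expr0 ?addNr //.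
under eq_bigr do rewrite E.
case: eqP => [->|/eqP nz].
  by under eq_bigr do rewrite ffunE; rewrite prodr_const card_ord.
have [i zi] : exists i, z i.
  apply/existsP; apply: contraR nz => /existsPn h; apply/eqP/ffunP => i.
  by rewrite ffunE; apply/negbTE/h.
by rewrite (bigD1 i) //= zi mul0r.
Qed.

Lemma xor0 n (c d : bits n) : (xor_bits c d == zero_bits n) = (c == d).
Proof.
apply/eqP/eqP => [h|->]; apply/ffunP => i.
  by have := congr1 (fun f : bits n => f i) h; rewrite !ffunE; case: (c i); case: (d i).
by rewrite !ffunE addbb.
Qed.

Lemma w_wb m n (x y : bits n) :
  w m x * wb m (xor_bits x y) = wb m y * (zeta R m ^+ 2) ^+ dotZ x y.
Proof.
rewrite /w /wb /dotZ -big_split -prodrXr -big_split /=; apply: eq_bigr => i _.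
rewrite ffunE; have h := zetaK m.
case: (x i) (y i) => [] []; rewrite /= ?expr0 ?expr1 ?mulr1 ?mul1r //.
by rewrite expr2 mulrA [_^* * _]mulrC h mul1r.
Qed.

Lemma norm_wb m n (y : bits n) : `|wb m y| = 1.
Proof.
rewrite /wb normr_prod big1 // => i _; case: (y i); rewrite ?normr1 //.
by rewrite norm_conjC norm_zeta.
Qed.


Lemma xorC n (x y : bits n) : xor_bits x y = xor_bits y x.
Proof. by apply/ffunP => i; rewrite !ffunE addbC. Qed.

Lemma sgn0 : sgn R false = 1.
Proof. by []. Qed.

Lemma amp m n (f g : bits n -> bool) (y : bits n) (psi3 : state2 R n) K
  (H : forall a x, psi3 a x = sgn R (f x) * K) :
  @app2 R n (tens n (omegabar R m)) (@app2 R n (phase_oracle R g)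
    (@app2 R n (tens n hadamard) (@ctrl_ip R n (@app2 R n (tens n (omega R m)) psi3))))
    y (zero_bits n)
  = s ^+ n * s ^+ n * s ^+ n * K * 2 ^+ n * wb m y * crosscorr m f g y.
Proof.
rewrite /app2 /ctrl_ip.
transitivity (\sum_c \sum_b \sum_x
  (s ^+ n * wb m c * sgn R (g c)) * (s ^+ n * sgn R (dotF2 c b) * sgn R (dotF2 b y))
   * (s ^+ n * w m x * sgn R (dotF2 b x) * (sgn R (f x) * K))).
  apply: eq_bigr => c _; rewrite oracle_sum tensOb dotC dot0 sgn0 mulr1 mulrA mulr_sumr.
  apply: eq_bigr => b _; rewrite tensH !mulrA mulr_sumr; apply: eq_bigr => x _.
  rewrite tensO H. ring.
under eq_bigr do rewrite exchange_big.
rewrite exchange_big /=.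
transitivity (\sum_x \sum_c (s ^+ n * s ^+ n * s ^+ n * K * (wb m c * sgn R (g c) * w m x * sgn R (f x)))
   * \sum_b sgn R (dotF2 b (xor_bits c (xor_bits y x)))).
  apply: eq_bigr => x _; apply: eq_bigr => c _; rewrite mulr_sumr; apply: eq_bigr => b _.
  rewrite !dot_xor [dotF2 c b]dotC; ring.
transitivity (\sum_x (s ^+ n * s ^+ n * s ^+ n * K * (wb m (xor_bits x y) * sgn R (g (xor_bits x y)) * w m x * sgn R (f x))) * 2 ^+ n).
  apply: eq_bigr => x _; under eq_bigr do rewrite charsum xor0 [xor_bits y x]xorC.
  rewrite (bigD1 (xor_bits x y)) //= eqxx big1 ?addr0 // => c /negbTE ->; by rewrite mulr0.
rewrite /crosscorr mulr_sumr; apply: eq_bigr => x _.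
rewrite sgnD.
transitivity (s ^+ n * s ^+ n * s ^+ n * K * 2 ^+ n * (sgn R (f x) * sgn R (g (xor_bits x y)))
  * (wb m y * (zeta R m ^+ 2) ^+ dotZ x y)); last by ring.
rewrite -w_wb; ring.
Qed.
End S.

Unset Implicit Arguments.
Theorem theorem9 (R : realType) (n m : nat) (f g : bits n -> bool) (y : bits n) :
  (0 < m)%N ->
  prob2 (algA m f g (tens n (@hadamard R))) y (zero_bits n)
  = (2 ^- (3 * n)) * `|crosscorr m f g y| ^+ 2.
Proof.
move=> _.
set s := invsqrt2 R.
rewrite /prob2 /algA /=.
rewrite (@amp R m n f g y _ (s ^+ n * s ^+ n)); last first.
  move=> a x; rewrite /app2 oracle_sum; congr (_ * _).
  rewrite /app1; under eq_bigr do rewrite init_sum.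
  rewrite (bigD1 (zero_bits n)) //= eqxx big1 ?addr0 => [|j /negbTE ->]; last by rewrite mulr0.
  by rewrite !tensH !dot0 sgn0 !mulr1.
rewrite (normrM (_ * @wb R m n y)) (normrM _ (@wb R m n y)) norm_wb mulr1 exprMn.
set A := (X in `|X| ^+ 2 * _).
have A0 : 0 <= A.
  by rewrite /A !mulr_ge0 ?exprn_ge0 ?s_ge0 ?ler0n.
rewrite (ger0_norm A0); congr (_ * _).
have e : (s ^+ n) ^+ 2 = (2^-1) ^+ n by rewrite -exprM mulnC exprM s2.
have -> : A ^+ 2 = ((s ^+ n) ^+ 2) ^+ 5 * (2 ^+ n) ^+ 2 by rewrite /A; ring.
rewrite e exprVn mulnC exprM.
have u0 : (2 ^+ n : R[i]) != 0 by rewrite expf_neq0 // pnatr_eq0.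
by field.
Qed.
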